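(* Fix $a\in(0,2)$ and $\alpha\in[0,1]$, and let $\varepsilon=n^{-a}$. Let $S,S'\in\mathcal{O}^{\varepsilon,2}_{\alpha N}$ and let $\mathbf{S}$ have distribution $\mathbb{R}(n,\alpha N)$. Then \[ \frac{\Pr(\mathbf{S}=S)}{\Pr(\mathbf{S}=S')}\le\exp\left(O\left(n^{2-a}\right)\right). \]
   Context: Throughout, $n\equiv1$ or $3\pmod 6$, $N=\binom n2/3$, $\alpha N$ is treated as an integer, and asymptotics are as $n\to\infty$. A partial system is a 3-uniform hypergraph on $[n]$ in which every pair lies in at most one hyperedge; $\mathcal{O}_m$ is the set of ordered partial systems with $m$ hyperedges and $S_i$ the first $i$ hyperedges of $S$. $G(S)$ is the graph on $[n]$ of pairs not covered by hyperedges of $S$. For a graph $G$ with $n$ vertices and $m$ edges, $d(G)=m/\binom n2$, and $G$ is $(\varepsilon,h)$-quasirandom if every set $A$ of at most $h$ vertices satisfies $\left|\bigcap_{w\in A}N_G(w)\right|=(1\pm\varepsilon)d(G)^{|A|}n$. $\mathcal{O}^{\varepsilon,h}_m$ is the set of $S\in\mathcal{O}_m$ with $G(S_i)$ $(\varepsilon,h)$-quasirandom for all $i\le m$. The triangle removal process starts from $K_n$ and repeatedly removes the edges of a uniformly random triangle of the current graph; $\mathbb{R}(n,m)$ is the distribution of the ordered sequence of the first $m$ removed triangles (an element of $\mathcal{O}_m$), or the symbol $*$ if the process runs out of triangles before $m$ steps. *)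

(* Defs.v *)
From Stdlib Require Import Reals.
From mathcomp Require Import all_boot.
Local Open Scope R_scope.

Set Implicit Arguments.
Unset Strict Implicit.
Unset Printing Implicit Defensive.

(* A (partial) system is represented as a sequence of subsets of [n] = 'I_n
   (ordered: the i-th entry is the i-th hyperedge). *)

Definition partial_system (n : nat) (S : seq {set 'I_n}) : bool :=
  all (fun e : {set 'I_n} => (#|e| == 3)%N) S && pairwise (fun e f : {set 'I_n} => (#|e :&: f| <= 1)%N) S.

Definition in_O (n m : nat) (S : seq {set 'I_n}) : bool :=
  ((size S == m)%N && partial_system S).

Definition adjG (n : nat) (S : seq {set 'I_n}) (u v : 'I_n) : bool :=
  (u != v) && all (fun e : {set 'I_n} => ~~ ((u \in e) && (v \in e))) S.

Definition nbhd (n : nat) (S : seq {set 'I_n}) (w : 'I_n) : {set 'I_n} :=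
  [set v | adjG S w v].

Definition num_edges (n : nat) (S : seq {set 'I_n}) : nat :=
  #|[set p : 'I_n * 'I_n | (p.1 < p.2)%N && adjG S p.1 p.2]|.

Definition density (n : nat) (S : seq {set 'I_n}) : R :=
  INR (num_edges S) / INR 'C(n, 2).

(* G(S) is (eps,h)-quasirandom: every set A of at most h vertices has
   |common neighbourhood| = (1 +- eps) d^|A| n  (empty intersection = [n]). *)
Definition quasirandom (n : nat) (eps : R) (h : nat) (S : seq {set 'I_n}) : Prop :=
  forall A : {set 'I_n}, (#|A| <= h)%N ->
    Rabs (INR #|\bigcap_(w in A) nbhd S w| - density S ^ #|A| * INR n)
       <= eps * (density S ^ #|A| * INR n).

Definition in_Oqr (n : nat) (eps : R) (h m : nat) (S : seq {set 'I_n}) : Prop :=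
  in_O m S /\ forall i : nat, (i <= m)%N -> quasirandom eps h (take i S).

Definition is_triangle (n : nat) (S : seq {set 'I_n}) (t : {set 'I_n}) : bool :=
  (#|t| == 3)%N && [forall u in t, forall v in t, (u != v) ==> adjG S u v].

Definition num_triangles (n : nat) (S : seq {set 'I_n}) : nat :=
  #|[set t : {set 'I_n} | is_triangle S t]|.

(* Probability that the first (size S) triangles removed by the triangle
   removal process (started from K_n, each step removing a uniformly random
   triangle of the current graph) are exactly S, in order.  By the chain rule,
   at step i the current graph is G(S_i), and the i+1-st hyperedge is chosen
   with probability 1/T(G(S_i)) if it is a triangle of G(S_i), else 0.
   This is the point mass Pr(R(n,m) = S) for S of length m. *)
Definition removal_prob (n : nat) (S : seq {set 'I_n}) : R :=
  \big[Rmult/1]_(i < size S)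
     if is_triangle (take i S) (nth set0 S i)
      then / INR (num_triangles (take i S)) else 0.

(* Main.v *)
Require Import Defs.
From Stdlib Require Import Reals Lra.
From HB Require Import structures.
From mathcomp Require Import all_boot zify.
Set Implicit Arguments. Unset Strict Implicit. Unset Printing Implicit Defensive.

Module CG.
Local Open Scope nat_scope.


Lemma card_dep (T1 T2 : finType) (P : pred T1) (F : T1 -> {set T2}) :
  #|[set x : T1 * T2 | P x.1 && (x.2 \in F x.1)]| = \sum_(u | P u) #|F u|.
Proof.
rewrite -sum1_card.
rewrite (eq_bigl (fun x : T1 * T2 => P x.1 && (x.2 \in F x.1))); last by move=> x; rewrite inE.
rewrite -(@pair_big_dep _ 0 addn _ _ P (fun u v => v \in F u) (fun _ _ => 1)) /=.
by apply: eq_bigr => u _; rewrite sum1_card.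
Qed.

Lemma card_pairs (T : finType) (t : {set T}) :
  #|[set x : T * T | (x.1 \in t) && (x.2 \in t :\ x.1)]| = #|t| * #|t|.-1.
Proof.
rewrite (card_dep (fun u => u \in t) (fun u => t :\ u)).
rewrite (eq_bigr (fun _ => #|t|.-1)); last first.
  by move=> u ut; rewrite (cardsD1 u t) ut.
by rewrite sum_nat_const mulnC.
Qed.

Lemma card_triples (T : finType) (t : {set T}) :
  #|[set x : (T * T) * T | ((x.1.1 \in t) && (x.1.2 \in t :\ x.1.1)) && (x.2 \in t :\ x.1.1 :\ x.1.2)]|
   = #|t| * #|t|.-1 * #|t|.-2.
Proof.
rewrite (card_dep (fun p : T * T => (p.1 \in t) && (p.2 \in t :\ p.1)) (fun p => t :\ p.1 :\ p.2)).
rewrite (eq_bigr (fun _ => #|t|.-2)); last first.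
  move=> [u v] /= /andP[ut vt]. rewrite (cardsD1 u t) ut (cardsD1 v (t :\ u)) vt /=.
  by [].
rewrite (eq_bigl (fun p => p \in [set p : T*T | (p.1 \in t) && (p.2 \in t :\ p.1)])); last by move=> p; rewrite inE.
by rewrite sum_nat_const card_pairs.
Qed.


Section G.
Variable n : nat.
Implicit Types s S : seq {set 'I_n}.

Definition Qc s := #|[set p : 'I_n * 'I_n | adjG s p.1 p.2]|.
Definition Pc s := #|[set x : ('I_n * 'I_n) * 'I_n |
   adjG s x.1.1 x.1.2 && (x.2 \in nbhd s x.1.1 :&: nbhd s x.1.2)]|.

Lemma adjC s u v : adjG s u v = adjG s v u.
Proof. rewrite /adjG eq_sym; congr (_ && _); apply: eq_all => e; by rewrite andbC. Qed.

Lemma adj_neq s u v : adjG s u v -> u != v.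
Proof. by case/andP. Qed.

Lemma card3_le (T : finType) (a b c : T) : #|[set a; b; c]| <= 3.
Proof.
rewrite cardsU cards1. apply: leq_trans (leq_subr _ _) _.
rewrite cardsU !cards1. have := leq_subr #|[set a] :&: [set b]| (1 + 1). lia.
Qed.

Lemma card3 (T : finType) (a b c : T) : a != b -> b != c -> c != a -> #|[set a; b; c]| = 3.
Proof.
move=> ab bc ca. apply/eqP; rewrite eqn_leq card3_le /=.
apply/card_gt2P; exists a, b, c; split; last by [].
by split; rewrite !inE eqxx ?orbT.
Qed.

Lemma edges_Qc s : num_edges s * 2 = Qc s.
Proof.
rewrite /num_edges /Qc.
set A := [set p : 'I_n * 'I_n | (p.1 < p.2) && adjG s p.1 p.2].
have eB : [set p : 'I_n * 'I_n | adjG s p.1 p.2] = A :|: [set (p.2, p.1) | p in A].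
  apply/setP => -[u v]; rewrite !inE /=.
  apply/idP/idP.
  - move=> huv. have := adj_neq huv. rewrite neq_ltn => /orP[lt|lt].
    + by rewrite lt huv.
    + apply/orP; right; apply/imsetP; exists (v,u) => //. by rewrite inE /= lt adjC.
  - case/orP => [/andP[_ ->] // | /imsetP[[x y] /[!inE] /= /andP[_ h] [-> ->]]]. by rewrite adjC.
rewrite eB cardsU card_imset; last by move=> [x y] [x' y'] /= [-> ->].
have -> : A :&: [set (p.2, p.1) | p in A] = set0.
  apply/setP => -[u v]; rewrite !inE /=. apply/negP => /andP[/andP[lt _] /imsetP[[x y] /[!inE] /= /andP[lt' _] [ex ey]]].
  subst. lia.
by rewrite cards0 subn0 muln2 addnn.
Qed.

Lemma Pc_sum s : Pc s = \sum_(p | adjG s p.1 p.2) #|nbhd s p.1 :&: nbhd s p.2|.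
Proof. exact: (card_dep (fun p : 'I_n * 'I_n => adjG s p.1 p.2) (fun p => nbhd s p.1 :&: nbhd s p.2)). Qed.

Lemma triP s (t : {set 'I_n}) : reflect (#|t| = 3 /\ forall u v : 'I_n, u \in t -> v \in t -> u != v -> adjG s u v) (is_triangle s t).
Proof.
apply: (iffP andP) => [[/eqP c3 /forallP H]|[c3 H]]; split => //.
- move=> u v ut vt uv. by move: (H u) => /implyP/(_ ut)/forallP/(_ v)/implyP/(_ vt)/implyP/(_ uv).
- by apply/eqP.
- apply/forallP => u; apply/implyP => ut; apply/forallP => v; apply/implyP => vt; apply/implyP => uv.
  exact: H.
Qed.

Lemma Pc_tri s : Pc s = 6 * num_triangles s.
Proof.
rewrite /Pc -sum1_card.
rewrite (partition_big (fun x : ('I_n * 'I_n) * 'I_n => [set x.1.1; x.1.2; x.2]) (is_triangle s)); last first.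
  move=> [[u v] w]; rewrite inE /= !inE => /andP[huv /andP[huw hvw]].
  have nuv := adj_neq huv; have nuw := adj_neq huw; have nvw := adj_neq hvw.
  apply/triP; split; first by apply: card3 => //; rewrite eq_sym.
  move=> x y; rewrite !inE => hx hy xy.
  by case/orP: hx => [/orP[]|] /eqP ?; case/orP: hy => [/orP[]|] /eqP ?; subst;
     rewrite ?eqxx // in xy *; rewrite // adjC.
rewrite /num_triangles.
rewrite (eq_bigl (fun t => t \in [set t | is_triangle s t])); last by move=> t; rewrite inE.
rewrite (eq_bigr (fun _ => 6)); first by rewrite sum_nat_const mulnC.
move=> t; rewrite inE => /triP[c3 H].
rewrite sum1_card.
have -> : 6 = #|t| * #|t|.-1 * #|t|.-2 by rewrite c3.
rewrite -card_triples. apply: eq_card => -[[u v] w].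
rewrite -topredE /= !inE /=.
apply/idP/idP.
- case/andP => /and3P[huv huw hvw] /eqP et.
  have nuv := adj_neq huv; have nuw := adj_neq huw; have nvw := adj_neq hvw.
  rewrite -et !inE !eqxx ?orbT /=.
  by rewrite eq_sym nuv eq_sym nvw eq_sym nuw.
- case/and4P => /and3P[ut vu vt] wv wu wt.
  rewrite !H // ?(eq_sym u) //; last by rewrite eq_sym.
  rewrite /=. rewrite eqEcard card3 //; last by rewrite eq_sym.
  rewrite c3 leqnn andbT. apply/subsetP => x; rewrite !inE.
  by case/orP => [/orP[]|] /eqP ->.
by rewrite eq_sym.
Qed.

Lemma adj_rcons s e u v : adjG (rcons s e) u v = adjG s u v && ~~((u \in e) && (v \in e)).
Proof. rewrite /adjG all_rcons. by rewrite andbAC andbA. Qed.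

Lemma ps_step S i : partial_system S -> i < size S ->
  #|nth set0 S i| = 3 /\ forall u v, u \in nth set0 S i -> v \in nth set0 S i -> u != v -> adjG (take i S) u v.
Proof.
case/andP => /allP H3 /pairwiseP Hpw lt.
split; first by apply/eqP/H3/mem_nth.
move=> u v ue ve uv. rewrite /adjG uv /=. apply/(all_nthP set0) => j.
rewrite size_take lt => ji. rewrite nth_take //.
apply/negP => /andP[uf vf].
have ji' : j < size S by lia.
have hc := Hpw set0 j i ji' lt ji.
have : #|[set u; v]| <= #|nth set0 S j :&: nth set0 S i|.
  by apply: subset_leq_card; apply/subsetP => x; rewrite !inE => /orP[] /eqP ->; rewrite ?uf ?ue ?vf ?ve.
rewrite cards2 uv. lia.
Qed.

Lemma Qc_step S i : partial_system S -> i < size S -> Qc (take i.+1 S) + 6 = Qc (take i S).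
Proof.
move=> ps lt; have [c3 H] := ps_step ps lt.
rewrite (take_nth set0 lt). set e := nth set0 S i. set s := take i S.
have -> : Qc s = #|[set p : 'I_n*'I_n | adjG (rcons s e) p.1 p.2] :|: [set p : 'I_n*'I_n | (p.1 \in e) && (p.2 \in e :\ p.1)]|.
  rewrite /Qc; apply: eq_card => -[u v]; rewrite !inE /= adj_rcons.
  case huv: (adjG s u v) => /=.
  - have := adj_neq huv. rewrite eq_sym => ->.
    by case: (u \in e); case: (v \in e).
  - apply/esym/negP => /andP[ue /andP[vu ve]].
    by move: huv; rewrite H // eq_sym.
rewrite cardsU.
have -> : [set p : 'I_n*'I_n | adjG (rcons s e) p.1 p.2] :&: [set p : 'I_n*'I_n | (p.1 \in e) && (p.2 \in e :\ p.1)] = set0.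
  apply/setP => -[u v]; rewrite !inE /= adj_rcons.
  by case: (u \in e); case: (v \in e); rewrite /= ?andbF ?andbT.
by rewrite card_pairs c3 cards0 subn0.
Qed.

Lemma Qc_take S i : partial_system S -> i <= size S -> Qc (take i S) + 6 * i = Qc [::].
Proof.
move=> ps; elim: i => [|i IH] le; first by rewrite take0 addn0.
have lt : i < size S by [].
rewrite -(IH (ltnW lt)) -(Qc_step ps lt). lia.
Qed.

Lemma tri_step S i : partial_system S -> i < size S -> is_triangle (take i S) (nth set0 S i).
Proof. move=> ps lt; have [c3 H] := ps_step ps lt. by apply/triP. Qed.
End G.

End CG.
Import CG.

Local Open Scope R_scope.

Lemma RmultA_ : associative Rmult. Proof. move=> x y z; ring. Qed.
Lemma RmultC_ : commutative Rmult. Proof. move=> x y; ring. Qed.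
Lemma Rmult1_ : left_id 1 Rmult. Proof. move=> x; ring. Qed.
HB.instance Definition _ := Monoid.isComLaw.Build R 1 Rmult RmultA_ RmultC_ Rmult1_.

Lemma bigcap2 n (a b : 'I_n) (F : 'I_n -> {set 'I_n}) : a != b ->
  \bigcap_(w in [set a; b]) F w = F a :&: F b.
Proof. move=> ab. rewrite big_setU1 ?big_set1 // inE. exact ab. Qed.

Lemma abs_le x b : Rabs x <= b -> -b <= x <= b.
Proof. move=> h; split; [have := Rle_abs (-x); rewrite Rabs_Ropp | have := Rle_abs x]; lra. Qed.

Lemma qr_bounds n (eps : R) (s : seq {set 'I_n}) : quasirandom eps 2 s ->
  let X := density s ^ 2 * INR n in
  (1 - eps) * X * INR (Qc s) <= INR (Pc s) /\ INR (Pc s) <= (1 + eps) * X * INR (Qc s).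
Proof.
move=> qr X.
have -> : Qc s = (\sum_(p | adjG s p.1 p.2) 1)%N.
  rewrite /Qc -sum1_card. apply: eq_bigl => p. by rewrite inE.
rewrite Pc_sum.
apply: (big_ind2 (fun x y => (1 - eps) * X * INR x <= INR y /\ INR y <= (1 + eps) * X * INR x)).
- rewrite /=; lra.
- move=> x1 x2 y1 y2 [h1 h2] [h3 h4]. rewrite !plus_INR. split; nra.
- move=> [u v] /= huv. have nuv := adj_neq huv.
  have := qr [set u; v]. rewrite cards2 nuv bigcap2 //= => /(_ (leqnn 2)) /abs_le.
  rewrite -/X. lra.
Qed.

Lemma step_bound n eps (s s' : seq {set 'I_n}) : 0 <= eps -> eps < 1 ->
  quasirandom eps 2 s -> quasirandom eps 2 s' -> Qc s = Qc s' ->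
  INR (num_triangles s') <= (1+eps)/(1-eps) * INR (num_triangles s).
Proof.
move=> e0 e1 q q' eQ.
have ed : density s = density s'.
  rewrite /density. congr (INR _ / _). apply/eqP.
  by rewrite -(eqn_pmul2r (isT : (0 < 2)%N)) !edges_Qc eQ.
have [h1 h2] := qr_bounds q. have [h3 h4] := qr_bounds q'.
rewrite -ed -eQ in h3 h4.
rewrite !Pc_tri !mult_INR in h1 h2 h3 h4.
set X := density s ^ 2 * INR n in h1 h2 h3 h4.
set Q := INR (Qc s) in h1 h2 h3 h4.
set T := INR (num_triangles s) in h1 h2 h3 h4 *.
set T' := INR (num_triangles s') in h1 h2 h3 h4 *.
have h6 : INR 6 = 6 by simpl; lra.
rewrite h6 in h1 h2 h3 h4.
have r0 : 0 <= (1 + eps) / (1 - eps).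
  apply: Rmult_le_pos; [|left; apply: Rinv_0_lt_compat]; lra.
have eq : (1 + eps) * X * Q = (1 + eps) / (1 - eps) * ((1 - eps) * X * Q) by field; lra.
have : 6 * T' <= (1 + eps) / (1 - eps) * (6 * T).
  apply: Rle_trans h4 _. rewrite eq. apply: Rmult_le_compat_l => //.
lra.
Qed.

Lemma tri_pos n (S : seq {set 'I_n}) i : partial_system S -> (i < size S)%N ->
  0 < INR (num_triangles (take i S)).
Proof.
move=> ps lt. apply: lt_0_INR. apply/ssrnat.ltP. apply/card_gt0P.
exists (nth set0 S i). rewrite inE. exact: tri_step.
Qed.

Definition Fr n (S0 : seq {set 'I_n}) (i : nat) : R :=
  if is_triangle (take i S0) (nth set0 S0 i) then / INR (num_triangles (take i S0)) else 0.

Lemma prod_bound n eps m (S S' : seq {set 'I_n}) : 0 <= eps -> eps < 1 ->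
  in_Oqr eps 2 m S -> in_Oqr eps 2 m S' ->
  forall k, (k <= m)%N ->
   0 < \big[Rmult/1]_(i < k) Fr S' i /\
   \big[Rmult/1]_(i < k) Fr S i <= ((1+eps)/(1-eps))^k * \big[Rmult/1]_(i < k) Fr S' i.
Proof.
move=> e0 e1 [/andP[/eqP sz ps] qr] [/andP[/eqP sz' ps'] qr'].
elim=> [|k IH] lek.
  rewrite !big_ord0 /=; lra.
have ltk : (k < m)%N by [].
have [IH1 IH2] := IH (ltnW lek).
rewrite !big_ord_recr /=.
have kS : (k < size S)%N by rewrite sz.
have kS' : (k < size S')%N by rewrite sz'.
rewrite /Fr (tri_step ps kS) (tri_step ps' kS') -!/(Fr _ _).
have hT := tri_pos ps kS. have hT' := tri_pos ps' kS'.
have eQ : Qc (take k S) = Qc (take k S').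
  have a := Qc_take ps (ltnW kS). have b := Qc_take ps' (ltnW kS').
  apply/eqP. by rewrite -(eqn_add2r (6*k)) a b.
have hst := step_bound e0 e1 (qr k (ltnW ltk)) (qr' k (ltnW ltk)) eQ.
set P := \big[Rmult/1]_(i < k) Fr S i in IH2 *.
set P' := \big[Rmult/1]_(i < k) Fr S' i in IH1 IH2 *.
set T := INR (num_triangles (take k S)) in hT hst *.
set T' := INR (num_triangles (take k S')) in hT' hst *.
set r := (1 + eps) / (1 - eps) in hst IH2 *.
have r0 : 0 <= r.
  apply: Rmult_le_pos; [|left; apply: Rinv_0_lt_compat]; lra.
have hinv : / T <= r * / T'.
  have iT := Rinv_0_lt_compat _ hT. have iT' := Rinv_0_lt_compat _ hT'.
  have := Rmult_le_compat_r (/ T * / T') _ _ (Rlt_le _ _ (Rmult_lt_0_compat _ _ iT iT')) hst.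
  have -> : T' * (/ T * / T') = / T by field; lra.
  have -> : r * T * (/ T * / T') = r * / T' by field; lra.
  done.
have iT := Rinv_0_lt_compat _ hT. have iT' := Rinv_0_lt_compat _ hT'.
have rk : 0 <= r ^ k by apply: pow_le.
split; first by apply: Rmult_lt_0_compat.
have h1 : P * / T <= r ^ k * P' * / T by apply: Rmult_le_compat_r; lra.
have h2 : r ^ k * P' * / T <= r ^ k * P' * (r * / T').
  apply: Rmult_le_compat_l => //. apply: Rmult_le_pos; lra.
have -> : r * r ^ k * (P' * / T') = r ^ k * P' * (r * / T') by ring.
lra.
Qed.

Lemma exp_mono x y : x <= y -> exp x <= exp y.
Proof. case=> h; [left; exact: exp_increasing | rewrite h; lra]. Qed.

Lemma exp_pow_ x k : exp x ^ k = exp (x * INR k).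
Proof.
elim: k => [|k IH]; first by rewrite /= Rmult_0_r exp_0.
have -> : exp x ^ k.+1 = exp x * exp x ^ k by []. rewrite IH -exp_plus S_INR. congr exp. ring.
Qed.

Lemma bin2_le n : ('C(n, 2) <= n ^ 2)%N.
Proof. have h := leq_mul (leqnn n) (leq_pred n).
rewrite bin2 leq_half_double expnS expn1. rewrite -addnn. apply: leq_trans h _.
by rewrite -addSn leq_addl. Qed.


Unset Implicit Arguments.
Theorem lemma2p7 (a alpha : R) (ha : 0 < a < 2) (halpha : 0 <= alpha <= 1) :
  exists C : R, exists n0 : nat,
  forall n : nat, (n0 <= n)%N -> (n %% 6 = 1 \/ n %% 6 = 3)%N ->
  forall m : nat,
    INR m <= alpha * (INR 'C(n, 2) / 3) < INR m + 1 ->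
  forall S S' : seq {set 'I_n},
    in_Oqr (Rpower (INR n) (- a)) 2 m S ->
    in_Oqr (Rpower (INR n) (- a)) 2 m S' ->
    removal_prob S / removal_prob S' <= exp (C * Rpower (INR n) (2 - a)).
Proof.
have [N hN] := INR_unbounded (Rpower 2 (/ a)).
exists 4, (maxn N 2) => n hn _ m [hm _] S S' hS hS'.
have hN' : (N <= n)%N by apply: leq_trans hn; exact: leq_maxl.
have h2 : (2 <= n)%N by apply: leq_trans hn; exact: leq_maxr.
have nN : INR N <= INR n by apply: le_INR; apply/ssrnat.leP.
have n2 : 2 <= INR n by have := le_INR 2 n (ssrnat.leP h2); simpl; lra.
have p2 : 0 < Rpower 2 (/ a) by rewrite /Rpower; apply: exp_pos.
have na : 2 <= Rpower (INR n) a.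
  have := @Rle_Rpower_l _ _ a (Rlt_le _ _ (proj1 ha)) (conj p2 (Rlt_le _ _ (Rlt_le_trans _ _ _ hN nN))).
  rewrite Rpower_mult Rinv_l ?Rpower_1; lra.
set eps := Rpower (INR n) (- a) in hS hS' *.
have e0 : 0 < eps by rewrite /eps /Rpower; apply: exp_pos.
have e2 : eps <= / 2.
  rewrite /eps Rpower_Ropp. apply: Rinv_le_contravar; lra.
have [B0 AB] := prod_bound (Rlt_le _ _ e0) (ltac:(lra) : eps < 1) hS hS' (leqnn m).
case: hS => /andP[/eqP szS _] _. case: hS' => /andP[/eqP szS' _] _.
rewrite /removal_prob.
change (\big[Rmult/1]_(i < size S) Fr S i / \big[Rmult/1]_(i < size S') Fr S' i <= exp (4 * Rpower (INR n) (2 - a))).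
rewrite szS szS'.
set A := \big[Rmult/1]_(i < m) Fr S i in AB *.
set B := \big[Rmult/1]_(i < m) Fr S' i in B0 AB *.
set r := (1 + eps) / (1 - eps) in AB.
have r0 : 0 <= r by apply: Rmult_le_pos; [|left; apply: Rinv_0_lt_compat]; lra.
have step1 : A / B <= r ^ m.
  have iB := Rinv_0_lt_compat _ B0.
  have := Rmult_le_compat_r (/ B) _ _ (Rlt_le _ _ iB) AB.
  have -> : r ^ m * B * / B = r ^ m by field; lra.
  done.
have r4 : r <= exp (4 * eps).
  apply: Rle_trans (exp_ineq1_le _).
  rewrite /r. apply: (Rmult_le_reg_r (1 - eps)); first lra.
  have -> : (1 + eps) / (1 - eps) * (1 - eps) = 1 + eps by field; lra.
  nra.
have step2 : r ^ m <= exp (4 * eps * INR m).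
  rewrite -exp_pow_. apply: pow_incr. lra.
have hmC : INR m <= INR n ^ 2.
  have := le_INR _ _ (ssrnat.leP (bin2_le n)). rewrite -mulnn mult_INR => hc.
  have := pos_INR 'C(n, 2). nra.
have hpow : eps * INR n ^ 2 = Rpower (INR n) (2 - a).
  rewrite /eps -Rpower_pow; last lra.
  rewrite -Rpower_plus. f_equal. simpl. ring.
have step3 : exp (4 * eps * INR m) <= exp (4 * Rpower (INR n) (2 - a)).
  apply: exp_mono. rewrite -hpow. nra.
lra.
Qed.
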